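(* Consider the bipartite Bell scenario $(2,2,2)$ with Alice's measurements $A_1,A_2$ and Bob's measurements $B_1,B_2$, all with outcomes in $\{0,1\}$. A nondisturbing behavior for this scenario is logically contextual if and only if there exist indices $i,k,j,\ell\in\{1,2\}$ with $i\neq k$ and $j\neq\ell$, and $(a,b),(\alpha_1,\alpha_2)\in\{0,1\}^2$ such that $p_{ij}(a,b)>0$, $p_{kj}(\alpha_1,b)=0$, $p_{i\ell}(a,\alpha_2)=0$, $p_{k\ell}(\lnot\alpha_1,\lnot\alpha_2)=0$, where $\lnot x=1-x$.
   Context: The contexts of the scenario are $\{A_\mu,B_\nu\}$ for $\mu,\nu\in\{1,2\}$; a behavior is a family of probability distributions $p_{\mu\nu}$ on $\{0,1\}^2$, where $p_{\mu\nu}(x,y)$ is the probability that $A_\mu=x$ and $B_\nu=y$. It is nondisturbing if the marginal distribution of each measurement is the same in every context containing it. Let $\bar p_{\mu\nu}(x,y)=1$ if $p_{\mu\nu}(x,y)>0$, else $0$. The behavior is logically noncontextual (logically local) if there exists $\bar p:\{0,1\}^{\{A_1,A_2,B_1,B_2\}}\to\{0,1\}$ such that for every context $\{A_\mu,B_\nu\}$ and $(x,y)$, $\max\{\bar p(t): t(A_\mu)=x,\ t(B_\nu)=y\}=\bar p_{\mu\nu}(x,y)$; otherwise it is logically contextual. *)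

(* Defs.v *)
(* Bell scenario (2,2,2): Alice's measurements A_mu, Bob's B_nu,
   mu, nu : 'I_2 (index 0 = measurement 1, index 1 = measurement 2),
   outcomes in bool (false = 0, true = 1). *)
From HB Require Import structures.
From mathcomp Require Import all_boot all_order all_algebra.
Set Implicit Arguments. Unset Strict Implicit. Unset Printing Implicit Defensive.
Import Order.TTheory GRing.Theory Num.Theory.
Local Open Scope ring_scope.

(* p mu nu x y = p_{mu nu}(x,y): probability that A_mu = x and B_nu = y *)
Definition behavior (R : realFieldType) := 'I_2 -> 'I_2 -> bool -> bool -> R.

Definition is_behavior (R : realFieldType) (p : behavior R) : Prop :=
  (forall mu nu x y, 0 <= p mu nu x y) /\
  (forall mu nu, \sum_(x : bool) \sum_(y : bool) p mu nu x y = 1).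

Definition nondisturbing (R : realFieldType) (p : behavior R) : Prop :=
  (forall mu nu nu' x, \sum_(y : bool) p mu nu x y = \sum_(y : bool) p mu nu' x y) /\
  (forall nu mu mu' y, \sum_(x : bool) p mu nu x y = \sum_(x : bool) p mu' nu x y).

(* global assignments t : {A_1,A_2,B_1,B_2} -> {0,1};
   t.1 mu = t(A_mu), t.2 nu = t(B_nu) *)
Definition gassign := ({ffun 'I_2 -> bool} * {ffun 'I_2 -> bool})%type.

Definition pbar (R : realFieldType) (p : behavior R) mu nu x y : bool :=
  0 < p mu nu x y.

(* logically noncontextual: exists pb : assignments -> {0,1} such that
   max { pb t | t(A_mu) = x, t(B_nu) = y } = pbar_{mu nu}(x,y);
   with values in {0,1} (= bool) the max is the boolean disjunction. *)
Definition logically_noncontextual (R : realFieldType) (p : behavior R) : Prop :=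
  exists pb : gassign -> bool,
    forall mu nu x y,
      [exists t : gassign, [&& t.1 mu == x, t.2 nu == y & pb t]] = pbar p mu nu x y.

Definition logically_contextual (R : realFieldType) (p : behavior R) : Prop :=
  ~ logically_noncontextual p.

(* Main.v *)
From Stdlib Require Import Classical.
Require Import Defs.
From HB Require Import structures.
From mathcomp Require Import all_boot all_order all_algebra.
From mathcomp Require Import lra.
Import Order.TTheory GRing.Theory Num.Theory.
Local Open Scope ring_scope.

Lemma key (f g : bool -> bool) (h : bool -> bool -> bool) :
  f false || f true -> g false || g true ->
  (forall a, f a -> h a false || h a true) ->
  (forall b, g b -> h false b || h true b) ->
  (forall a1 a2, [|| f a1, g a2 | h (~~a1) (~~a2)]) ->
  exists a b, [&& f a, g b & h a b].
Proof.
move=> F G Hf Hg Hn.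
have Hf0 := Hf false; have Hf1 := Hf true; have Hg0 := Hg false; have Hg1 := Hg true.
have N00 := Hn false false; have N01 := Hn false true.
have N10 := Hn true false; have N11 := Hn true true.
clear Hf Hg Hn.
suff: [|| [&& f false, g false & h false false], [&& f false, g true & h false true],
  [&& f true, g false & h true false] | [&& f true, g true & h true true]].
  by case/or4P => ?; [exists false, false | exists false, true
    | exists true, false | exists true, true].
move: F G Hf0 Hf1 Hg0 Hg1 N00 N01 N10 N11 => /=.
move: (f false) (f true) (g false) (g true) (h false false) (h false true)
  (h true false) (h true true).
by do 8 case.
Qed.

Lemma I2 (mu m : 'I_2) : (m == mu) || (m == lift mu ord0).
Proof. by case: mu m => [[|[|//]] ?] [[|[|//]] ?]. Qed.

Lemma liftF (mu : 'I_2) : (lift mu ord0 == mu) = false.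
Proof. by rewrite eq_sym (negbTE (neq_lift _ _)). Qed.

Lemma marg_pos (R : realFieldType) (a0 a1 c0 c1 : R) :
  0 <= a0 -> 0 <= a1 -> 0 <= c0 -> 0 <= c1 -> a0 + a1 = c0 + c1 ->
  (0 < a0) || (0 < a1) -> (0 < c0) || (0 < c1).
Proof.
move=> ? ? ? ? E H.
case: (ltP 0 c0) => //= h0; case: (ltP 0 c1) => //= h1.
exfalso; case/orP: H => H; lra.
Qed.

Arguments marg_pos {R a0 a1 c0 c1}.

Lemma margA (R : realFieldType) (p : behavior R) :
  is_behavior p -> nondisturbing p ->
  forall (mu nu nu' : 'I_2) x y, 0 < p mu nu x y ->
  pbar p mu nu' x false || pbar p mu nu' x true.
Proof.
move=> [Hn _] [HA _] mu nu nu' x y Hp.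
have := HA mu nu nu' x; rewrite !big_bool => E.
rewrite /pbar orbC; apply: (marg_pos _ _ _ _ E) => //.
by case: y Hp => ->; rewrite ?orbT.
Qed.

Lemma margB (R : realFieldType) (p : behavior R) :
  is_behavior p -> nondisturbing p ->
  forall (nu mu mu' : 'I_2) x y, 0 < p mu nu x y ->
  pbar p mu' nu false y || pbar p mu' nu true y.
Proof.
move=> [Hn _] [_ HB] nu mu mu' x y Hp.
have := HB nu mu mu' y; rewrite !big_bool => E.
rewrite /pbar orbC; apply: (marg_pos _ _ _ _ E) => //.
by case: x Hp => ->; rewrite ?orbT.
Qed.

Arguments margA {R p}.
Arguments margB {R p}.

Lemma zero_of (R : realFieldType) (c : R) : 0 <= c -> ~~ (0 < c) -> c = 0.
Proof. by move=> h1 h2; apply/eqP; rewrite eq_le h1 andbT leNgt. Qed.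

Lemma bneq (x y : bool) : x != y -> x = ~~ y.
Proof. by case: x; case: y. Qed.

Theorem corollary1 (R : realFieldType) (p : behavior R) :
  is_behavior p -> nondisturbing p ->
  (logically_contextual p <->
   exists (i k j l : 'I_2) (a b al1 al2 : bool),
     i != k /\ j != l /\ 0 < p i j a b /\ p k j al1 b = 0 /\
     p i l a al2 = 0 /\ p k l (~~ al1) (~~ al2) = 0).
Proof.
move=> Hb Hnd; split; last first.
  move=> [i [k [j [l [a [b [al1 [al2 [_ [_ [Hp [H1 [H2 H3]]]]]]]]]]]]] [pb Hpb].
  have := Hpb i j a b; rewrite /pbar Hp => /existsP [t /and3P[/eqP ti /eqP tj pt]].
  have hk : pbar p k j (t.1 k) b.
    by rewrite -Hpb; apply/existsP; exists t; rewrite tj !eqxx pt.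
  have hl : pbar p i l a (t.2 l).
    by rewrite -Hpb; apply/existsP; exists t; rewrite ti !eqxx pt.
  have e1 : t.1 k = ~~ al1.
    by apply: bneq; apply: contraTneq hk => ->; rewrite /pbar H1 ltxx.
  have e2 : t.2 l = ~~ al2.
    by apply: bneq; apply: contraTneq hl => ->; rewrite /pbar H2 ltxx.
  have : pbar p k l (t.1 k) (t.2 l).
    by rewrite -Hpb; apply/existsP; exists t; rewrite !eqxx pt.
  by rewrite e1 e2 /pbar H3 ltxx.
move=> Hctx; apply: NNPP => Hno; apply: Hctx.
have Hnn := Hb.1.
exists (fun t : gassign => [forall m, forall n, pbar p m n (t.1 m) (t.2 n)]).
move=> mu nu x y; apply/idP/idP.
  case/existsP=> t /and3P[/eqP <- /eqP <- /forallP H].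
  exact: (forallP (H mu)) nu.
move=> Hpos.
set k := lift mu (@ord0 0); set l := lift nu (@ord0 0).
have Hn : forall a1 a2, [|| pbar p k nu a1 y, pbar p mu l x a2 | pbar p k l (~~a1) (~~a2)].
  move=> a1 a2.
  apply/negPn/negP => /norP [nf /norP [ng nh]]; apply: Hno.
  exists mu, k, nu, l, x, y, a1, a2; split; first exact: neq_lift.
  split; first exact: neq_lift.
  by do !split => //; apply: zero_of.
have [a [b /and3P [fa gb hab]]] :=
  @key (fun a => pbar p k nu a y) (fun b => pbar p mu l x b) (fun a b => pbar p k l a b)
    (margB Hb Hnd nu mu k x y Hpos) (margA Hb Hnd mu nu l x y Hpos)
    (fun a H => margA Hb Hnd k nu l a y H) (fun b H => margB Hb Hnd l mu k x b H) Hn.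
apply/existsP; exists ([ffun m => if m == mu then x else a],
                       [ffun n => if n == nu then y else b]).
rewrite /= !ffunE !eqxx /=; apply/forallP => m; apply/forallP => n; rewrite !ffunE.
case/orP: (I2 mu m) => /eqP ->; case/orP: (I2 nu n) => /eqP ->;
  by rewrite ?liftF ?eqxx.
Qed.
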